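(* Let $J=[0,+\infty)$ and let $A\colon J\to\mathcal{L}(\mathbb{R}^n)$ be of locally bounded variation on $J$ such that $I-\Delta^{-}A(t)$ is invertible for all $t\in(0,+\infty)$ and $I+\Delta^{+}A(t)$ is invertible for all $t\in J$. Let $U$ be the transition matrix of $\frac{dx}{d\tau}=D[A(t)x]$. Then the trivial solution of this equation is globally asymptotically stable if and only if for every $s_0\in J$, $\|U(t,s_0)\|\to 0$ as $t\to+\infty$.
   Context: Here $\Delta^{+}A(t)=A(t^+)-A(t)$, $\Delta^{-}A(t)=A(t)-A(t^-)$. Integrals $\int_a^b \mathrm{d}[A(s)]x(s)$ are Perron–Stieltjes (Kurzweil–Stieltjes) integrals. A solution of $\frac{dx}{d\tau}=D[A(t)x]$ is a function $x$ with $x(b)-x(a)=\int_a^b\mathrm{d}[A(s)]x(s)$ for all $a,b$ in its interval of definition. The transition matrix $U\colon J\times J\to\mathcal{L}(\mathbb{R}^n)$ is the unique matrix function with $U(t,s)=I+\int_s^t\mathrm{d}[A(r)]U(r,s)$; the unique solution with $x(s_0)=x_0$ is $x(t,s_0,x_0)=U(t,s_0)x_0$ for $t\ge s_0$. The trivial solution is stable if for every $s_0\ge0$ and $\varepsilon>0$ there is $\delta=\delta(s_0,\varepsilon)>0$ such that $\|x_0\|<\delta$ implies $\|x(t,s_0,x_0)\|<\varepsilon$ for all $t\ge s_0$. It is globally asymptotically stable if it is stable and for every $s_0\ge 0$ and every $x_0\in\mathbb{R}^n$, $\|x(t,s_0,x_0)\|\to0$ as $t\to+\infty$. *)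

(* Defs.v *)
From HB Require Import structures.
From mathcomp Require Import all_boot all_order all_algebra.
From mathcomp Require Import all_classical all_reals all_analysis.
Set Implicit Arguments. Unset Strict Implicit. Unset Printing Implicit Defensive.
Import Order.TTheory GRing.Theory Num.Theory.
Import numFieldNormedType.Exports.
Local Open Scope classical_set_scope.
Local Open Scope ring_scope.

Section KS.
Variables (R : realType) (n : nat).

Definition division (a b : R) (m : nat) (D : nat -> R) : Prop :=
  D 0%N = a /\ D m = b /\ (forall i, (i < m)%N -> D i < D i.+1).

Definition tagged_division (a b : R) (m : nat) (D T : nat -> R) : Prop :=
  division a b m D /\ (forall i, (i < m)%N -> D i <= T i <= D i.+1).

Definition delta_fine (delta : R -> R) (m : nat) (D T : nat -> R) : Prop :=
  forall i, (i < m)%N -> T i - delta (T i) < D i /\ D i.+1 < T i + delta (T i).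

Definition var_sum (A : R -> 'M[R]_n) (m : nat) (D : nat -> R) : R :=
  \sum_(i < m) `|A (D i.+1) - A (D i)|.

Definition bounded_variation_on (A : R -> 'M[R]_n) (a b : R) : Prop :=
  exists M : R, forall m D, division a b m D -> var_sum A m D <= M.

Definition loc_BV_J (A : R -> 'M[R]_n) : Prop :=
  forall a b, 0 <= a -> a <= b -> bounded_variation_on A a b.

Definition KS_sum (p : nat) (A : R -> 'M[R]_n) (x : R -> 'M[R]_(n, p))
    (m : nat) (D T : nat -> R) : 'M[R]_(n, p) :=
  \sum_(i < m) ((A (D i.+1) - A (D i)) *m x (T i)).

Definition KS_integral_le (p : nat) (A : R -> 'M[R]_n) (x : R -> 'M[R]_(n, p))
    (a b : R) (I : 'M[R]_(n, p)) : Prop :=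
  forall eps : R, 0 < eps ->
    exists delta : R -> R, (forall t, a <= t <= b -> 0 < delta t) /\
      forall m D T, tagged_division a b m D T -> delta_fine delta m D T ->
        `|KS_sum A x m D T - I| < eps.

Definition KS_integral (p : nat) (A : R -> 'M[R]_n) (x : R -> 'M[R]_(n, p))
    (a b : R) (I : 'M[R]_(n, p)) : Prop :=
  if a <= b then KS_integral_le A x a b I else KS_integral_le A x b a (- I).

Definition jump_plus (A : R -> 'M[R]_n) (t : R) : 'M[R]_n :=
  lim (A s @[s --> t^'+]) - A t.
Definition jump_minus (A : R -> 'M[R]_n) (t : R) : 'M[R]_n :=
  A t - lim (A s @[s --> t^'-]).

Definition transition_matrix (A : R -> 'M[R]_n) (U : R -> R -> 'M[R]_n) : Prop :=
  forall t s, 0 <= t -> 0 <= s ->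
    KS_integral A (fun r => U r s) s t (U t s - 1%:M).

Definition is_solution_from (A : R -> 'M[R]_n) (s0 : R) (x : R -> 'cV[R]_n) : Prop :=
  forall a b, s0 <= a -> s0 <= b -> KS_integral A x a b (x b - x a).

(* Stability of the trivial solution; x(t, s0, x0) is the solution on [s0,+oo)
   with x(s0) = x0. *)
Definition trivial_stable (A : R -> 'M[R]_n) : Prop :=
  forall s0 eps : R, 0 <= s0 -> 0 < eps ->
    exists delta : R, 0 < delta /\
      forall (x0 : 'cV[R]_n) (x : R -> 'cV[R]_n),
        `|x0| < delta -> is_solution_from A s0 x -> x s0 = x0 ->
        forall t, s0 <= t -> `|x t| < eps.

Definition trivial_glob_asympt_stable (A : R -> 'M[R]_n) : Prop :=
  trivial_stable A /\
  forall (s0 : R) (x0 : 'cV[R]_n) (x : R -> 'cV[R]_n), 0 <= s0 ->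
    is_solution_from A s0 x -> x s0 = x0 ->
    `|x t| @[t --> +oo] --> (0 : R).

End KS.

(* Main.v *)
Require Import Defs.
From HB Require Import structures.
From mathcomp Require Import all_boot all_order all_algebra.
From mathcomp Require Import all_classical all_reals all_analysis.
From mathcomp Require Import ring lra.
Import Order.TTheory GRing.Theory Num.Theory.
Import numFieldNormedType.Exports.
Local Open Scope classical_set_scope.
Local Open Scope ring_scope.
Set Implicit Arguments. Unset Strict Implicit. Unset Printing Implicit Defensive.


Section Div.
Variable R : realType.

Definition catD (m1 : nat) (D1 D2 : nat -> R) (i : nat) : R :=
  if (i <= m1)%N then D1 i else D2 (i - m1)%N.
Definition catT (m1 : nat) (T1 T2 : nat -> R) (i : nat) : R :=
  if (i < m1)%N then T1 i else T2 (i - m1)%N.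

Lemma catD_l m1 D1 D2 i : (i <= m1)%N -> catD m1 D1 D2 i = D1 i.
Proof. by rewrite /catD => ->. Qed.

Lemma catD_r m1 D1 D2 i : D1 m1 = D2 0%N -> (m1 <= i)%N ->
  catD m1 D1 D2 i = D2 (i - m1)%N.
Proof.
rewrite /catD => E le; case: ifP => // h.
have -> : i = m1 by apply/eqP; rewrite eqn_leq h le.
by rewrite subnn.
Qed.

Lemma division_cat a b c m1 m2 D1 D2 :
  division a b m1 D1 -> division b c m2 D2 ->
  division a c (m1 + m2) (catD m1 D1 D2).
Proof.
move=> [h0 [h1 h2]] [k0 [k1 k2]].
have E : D1 m1 = D2 0%N by rewrite h1 k0.
split; first by rewrite catD_l.
split; first by rewrite catD_r ?leq_addr // addKn.
move=> i lti.
case: (ltnP i m1) => him.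
  by rewrite !catD_l //; [exact: h2 | exact: ltnW].
rewrite !catD_r //; last exact: leqW.
rewrite subSn //; apply: k2; rewrite ltn_subLR //.
Qed.

Lemma tagged_cat a b c m1 m2 D1 T1 D2 T2 :
  tagged_division a b m1 D1 T1 -> tagged_division b c m2 D2 T2 ->
  tagged_division a c (m1 + m2) (catD m1 D1 D2) (catT m1 T1 T2).
Proof.
move=> [d1 t1] [d2 t2]; split; first exact: division_cat d1 d2.
have E : D1 m1 = D2 0%N by case: d1 => _ [-> _]; case: d2 => ->.
move=> i lti; rewrite /catT; case: ifP => him.
  by rewrite !catD_l //; [exact: t1 | exact: ltnW].
move/negbT: him; rewrite -leqNgt => him.
rewrite !catD_r //; last exact: leqW.
rewrite subSn //; apply: t2; rewrite ltn_subLR //.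
Qed.

Lemma fine_cat (delta : R -> R) (a b c : R) m1 m2 D1 T1 D2 T2 :
  tagged_division a b m1 D1 T1 -> tagged_division b c m2 D2 T2 ->
  delta_fine delta m1 D1 T1 -> delta_fine delta m2 D2 T2 ->
  delta_fine delta (m1 + m2) (catD m1 D1 D2) (catT m1 T1 T2).
Proof.
move=> [d1 t1] [d2 t2] f1 f2.
have E : D1 m1 = D2 0%N by case: d1 => _ [-> _]; case: d2 => ->.
move=> i lti; rewrite /catT; case: ifP => him.
  by rewrite !catD_l //; [exact: f1 | exact: ltnW].
move/negbT: him; rewrite -leqNgt => him.
rewrite !catD_r //; last exact: leqW.
rewrite subSn //; apply: f2; rewrite ltn_subLR //.
Qed.

Lemma sum_cat (V : zmodType) m1 m2 (F : nat -> V) :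
  \sum_(i < m1 + m2) F i = \sum_(i < m1) F i + \sum_(i < m2) F (m1 + i)%N.
Proof. by rewrite big_split_ord. Qed.

Lemma sum_catDT (V : zmodType) (G : R -> R -> R -> V) m1 m2 D1 T1 D2 T2 :
  D1 m1 = D2 0%N ->
  \sum_(i < m1 + m2) G (catD m1 D1 D2 i.+1) (catD m1 D1 D2 i) (catT m1 T1 T2 i)
  = \sum_(i < m1) G (D1 i.+1) (D1 i) (T1 i) + \sum_(i < m2) G (D2 i.+1) (D2 i) (T2 i).
Proof.
move=> E; rewrite (@sum_cat _ m1 m2 (fun i => G (catD m1 D1 D2 i.+1) (catD m1 D1 D2 i) (catT m1 T1 T2 i))).
congr (_ + _); apply: eq_bigr => i _.
  by rewrite /catT ltn_ord !catD_l // ltnW.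
rewrite /catT ltnNge leq_addr /= addKn !catD_r ?leq_addr //; last by rewrite -addnS leq_addr.
by rewrite -addnS !addKn.
Qed.

Definition fine_div (delta : R -> R) a b :=
  exists m D T, tagged_division a b m D T /\ delta_fine delta m D T.

Lemma fine_div_cat (delta : R -> R) (a b c : R) :
  fine_div delta a b -> fine_div delta b c -> fine_div delta a c.
Proof.
move=> [m1 [D1 [T1 [t1 f1]]]] [m2 [D2 [T2 [t2 f2]]]].
exists (m1 + m2)%N, (catD m1 D1 D2), (catT m1 T1 T2); split.
  exact: tagged_cat t1 t2.
exact: fine_cat t1 t2 f1 f2.
Qed.

Definition D1pt (a b : R) (i : nat) := if i == 0%N then a else b.

Lemma tagged_single a b t : a < b -> a <= t <= b ->
  tagged_division a b 1 (D1pt a b) (fun _ => t).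
Proof.
move=> ab tab; split; first split => //; first split => //.
  by move=> i; rewrite ltnS leqn0 => /eqP ->.
by move=> i; rewrite ltnS leqn0 => /eqP ->.
Qed.

Lemma fine_div_single (delta : R -> R) (a b t : R) : a < b -> a <= t <= b ->
  t - delta t < a -> b < t + delta t -> fine_div delta a b.
Proof.
move=> ab tab h1 h2; exists 1%N, (D1pt a b), (fun _ => t); split.
  exact: tagged_single.
by move=> i; rewrite ltnS leqn0 => /eqP ->.
Qed.

Lemma tagged_refl (a : R) : tagged_division a a 0 (fun _ => a) (fun _ => a).
Proof. split; first by split => //; split. by move=> i. Qed.

Lemma fine_div_refl (delta : R -> R) (a : R) : fine_div delta a a.
Proof.
by exists 0%N, (fun _ => a), (fun _ => a); split; [exact: tagged_refl|].
Qed.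

Lemma cousin (delta : R -> R) (a b : R) : a <= b -> (forall t, a <= t <= b -> 0 < delta t) ->
  fine_div delta a b.
Proof.
move=> ab dpos.
pose S := [set x | a <= x <= b /\ fine_div delta a x].
have Sa : S a by split; [rewrite lexx ab | exact: fine_div_refl].
have hs : has_sup S.
  split; first by exists a.
  by exists b => x [/andP[]].
pose c := sup S.
have ac : a <= c by apply: (sup_upper_bound hs).
have cb : c <= b by apply: ge_sup; [exists a | move=> x [/andP[]]].
have dc : 0 < delta c by apply: dpos; rewrite ac cb.
have [x [/andP[ax xb] fx] cx] := sup_adherent dc hs.
have xc : x <= c by apply: (sup_upper_bound hs); split => //; rewrite ax xb.
have Sc : fine_div delta a c.
  case: (eqVneq x c) => [<- //|xnc].
  have xlc : x < c by rewrite lt_neqAle xnc xc.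
  apply: fine_div_cat fx _.
  apply: (@fine_div_single _ _ _ c) => //; first by rewrite xc lexx.
    by move: cx; rewrite -/c; lra.
case: (eqVneq c b) => [<- //|cnb].
have clb : c < b by rewrite lt_neqAle cnb cb.
exfalso.
pose y := if c + delta c / 2 <= b then c + delta c / 2 else b.
have cy : c < y by rewrite /y; case: ifP => _; lra.
have yb : y <= b by rewrite /y; case: ifP => h; lra.
have yd : y < c + delta c by rewrite /y; case: ifP => h; [lra | move/negbT: h; rewrite -ltNge; lra].
have Sy : S y.
  split; first by apply/andP; split; lra.
  apply: fine_div_cat Sc _.
  apply: (@fine_div_single _ _ _ c) => //; first by rewrite lexx ltW.
  by lra.
have : y <= c by apply: (sup_upper_bound hs).
by lra.
Qed.

End Div.


Section MxNorm.
Variable R : realType.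

Lemma mx_entry_le p q (M : 'M[R]_(p, q)) i j : `|M i j| <= `|M|.
Proof.
by rewrite [leRHS]/Num.Def.normr /= mx_normrE; apply/bigmax_geP; right => /=; exists (i, j).
Qed.

Lemma mx_norm_le p q (M : 'M[R]_(p, q)) (c : R) : 0 <= c ->
  (forall i j, `|M i j| <= c) -> `|M| <= c.
Proof.
move=> c0 h; rewrite [leLHS]/Num.Def.normr /= mx_normrE; apply: bigmax_le => // -[i j] _.
Qed.

Lemma mulmx_norm p q r (M : 'M[R]_(p, q)) (N : 'M[R]_(q, r)) :
  `|M *m N| <= q%:R * `|M| * `|N|.
Proof.
apply: mx_norm_le; first by rewrite !mulr_ge0.
move=> i j; rewrite mxE.
apply: le_trans (ler_norm_sum _ _ _) _.
apply: le_trans (_ : \sum_(k < q) (`|M| * `|N|) <= _).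
  apply: ler_sum => k _; rewrite normrM.
  by apply: ler_pM => //; apply: mx_entry_le.
by rewrite sumr_const card_ord -mulrA mulr_natl.
Qed.

End MxNorm.


Section Integral.
Variables (R : realType) (n : nat) (A : R -> 'M[R]_n).

Definition gmin (d1 d2 : R -> R) (t : R) := if d1 t <= d2 t then d1 t else d2 t.

Lemma gmin_pos (d1 d2 : R -> R) (a b : R) :
  (forall t, a <= t <= b -> 0 < d1 t) -> (forall t, a <= t <= b -> 0 < d2 t) ->
  forall t, a <= t <= b -> 0 < gmin d1 d2 t.
Proof. by move=> h1 h2 t ht; rewrite /gmin; case: ifP => _; [exact: h1|exact: h2]. Qed.

Lemma fine_gmin_l (d1 d2 : R -> R) m D T :
  delta_fine (gmin d1 d2) m D T -> delta_fine d1 m D T.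
Proof. move=> h i lti; have := h i lti; rewrite /gmin; by case: (lerP (d1 (T i)) (d2 (T i))) => hle [h1 h2]; split; lra. Qed.

Lemma fine_gmin_r (d1 d2 : R -> R) m D T :
  delta_fine (gmin d1 d2) m D T -> delta_fine d2 m D T.
Proof. move=> h i lti; have := h i lti; rewrite /gmin; by case: (lerP (d1 (T i)) (d2 (T i))) => hle [h1 h2]; split; lra. Qed.

Lemma cat_all p (x : R -> 'M[R]_(n, p)) (delta : R -> R) (a b c : R)
    m1 D1 T1 m2 D2 T2 :
  tagged_division a b m1 D1 T1 -> delta_fine delta m1 D1 T1 ->
  tagged_division b c m2 D2 T2 -> delta_fine delta m2 D2 T2 ->
  exists m D T, [/\ tagged_division a c m D T, delta_fine delta m D T,
     KS_sum A x m D T = KS_sum A x m1 D1 T1 + KS_sum A x m2 D2 T2 &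
     var_sum A m D = var_sum A m1 D1 + var_sum A m2 D2].
Proof.
move=> t1 f1 t2 f2.
have E : D1 m1 = D2 0%N by case: t1 => [[_ [-> _]] _]; case: t2 => [[-> _] _].
exists (m1 + m2)%N, (catD m1 D1 D2), (catT m1 T1 T2); split.
- exact: tagged_cat t1 t2.
- exact: fine_cat t1 t2 f1 f2.
- exact: (@sum_catDT _ _ (fun u v w => (A u - A v) *m x w) m1 m2 D1 T1 D2 T2 E).
- exact: (@sum_catDT _ _ (fun u v _ => `|A u - A v|) m1 m2 D1 T1 D2 T2 E).
Qed.

Lemma mx_id1 p q (S S1 S2 I I1 I2 : 'M[R]_(p,q)) :
  S - (I - I1 - I2) = (S1 + S + S2 - I) - (S1 - I1) - (S2 - I2).
Proof. by apply/matrixP => i j; rewrite !mxE; ring. Qed.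

Lemma mx_id2 p q (S1 S2 I1 I2 : 'M[R]_(p,q)) :
  S1 - S2 - (I1 - I2) = (S1 - I1) - (S2 - I2).
Proof. by apply/matrixP => i j; rewrite !mxE; ring. Qed.

Lemma mx_id3 p q (S I J : 'M[R]_(p,q)) : I - J = - (S - I) + (S - J).
Proof. by apply/matrixP => i j; rewrite !mxE; ring. Qed.

Lemma mx_id4 p q (d c a b : 'M[R]_(p,q)) : d - c - (a - c) - (d - b) = b - a.
Proof. by apply/matrixP => i j; rewrite !mxE; ring. Qed.

Lemma norm3 p q (u v w : 'M[R]_(p,q)) : `|u - v - w| <= `|u| + `|v| + `|w|.
Proof. by apply: le_trans (ler_normB _ _) _; rewrite lerD2r; exact: ler_normB. Qed.

Lemma KS_le_unique p (x : R -> 'M[R]_(n, p)) a b I J : a <= b ->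
  KS_integral_le A x a b I -> KS_integral_le A x a b J -> I = J.
Proof.
move=> ab hI hJ.
have [d0|] := ltP 0 `|I - J|; last first.
  by move=> h; apply/eqP; rewrite -subr_eq0 -normr_le0.
have e0 : 0 < `|I - J| / 2 by rewrite divr_gt0.
have [d1 [p1 h1]] := hI _ e0; have [d2 [p2 h2]] := hJ _ e0.
have [m [D [T [tD fD]]]] := cousin ab (gmin_pos p1 p2).
have := h1 _ _ _ tD (fine_gmin_l fD); have := h2 _ _ _ tD (fine_gmin_r fD).
have : `|I - J| <= `|KS_sum A x m D T - I| + `|KS_sum A x m D T - J|.
  rewrite (mx_id3 (KS_sum A x m D T)).
  by apply: le_trans (ler_normD _ _) _; rewrite normrN.
move=> q1 q2 q3; exfalso; lra.
Qed.

Lemma KS_sum_mulmx p r (x : R -> 'M[R]_(n, p)) (v : 'M[R]_(p, r)) m D T :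
  KS_sum A (fun s => x s *m v) m D T = KS_sum A x m D T *m v.
Proof. by rewrite /KS_sum mulmx_suml; apply: eq_bigr => i _; rewrite mulmxA. Qed.

Lemma KS_le_mulmx p r (x : R -> 'M[R]_(n, p)) (v : 'M[R]_(p, r)) a b I :
  KS_integral_le A x a b I -> KS_integral_le A (fun s => x s *m v) a b (I *m v).
Proof.
move=> h eps e0.
have k0 : 0 < p%:R * `|v| + 1.
  by apply: (lt_le_trans ltr01); rewrite lerDr mulr_ge0.
have [d [dp hd]] := h (eps / (p%:R * `|v| + 1)) (divr_gt0 e0 k0).
exists d; split => // m D T tD fD.
rewrite KS_sum_mulmx -mulmxBl.
apply: le_lt_trans (mulmx_norm _ _) _.
have := hd _ _ _ tD fD.
rewrite ltr_pdivlMr //.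
have z0 := normr_ge0 (KS_sum A x m D T - I).
have v0 := normr_ge0 v.
have p0 : 0 <= p%:R :> R by [].
move: z0 v0 p0.
set z := `|KS_sum A x m D T - I|; set w := `|v|; set k := p%:R.
move=> z0 v0 p0 hz.
have : k * z * w <= z * (k * w + 1).
  by rewrite mulrDr mulr1 mulrCA mulrA lerDl.
lra.
Qed.

Lemma KS_sum_sub p (x1 x2 : R -> 'M[R]_(n, p)) m D T :
  KS_sum A (fun s => x1 s - x2 s) m D T = KS_sum A x1 m D T - KS_sum A x2 m D T.
Proof. by rewrite /KS_sum -sumrB; apply: eq_bigr => i _; rewrite mulmxBr. Qed.

Lemma KS_le_sub p (x1 x2 : R -> 'M[R]_(n, p)) a b I1 I2 :
  KS_integral_le A x1 a b I1 -> KS_integral_le A x2 a b I2 ->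
  KS_integral_le A (fun s => x1 s - x2 s) a b (I1 - I2).
Proof.
move=> h1 h2 eps e0.
have e2 : 0 < eps / 2 by rewrite divr_gt0.
have [d1 [p1 k1]] := h1 _ e2; have [d2 [p2 k2]] := h2 _ e2.
exists (gmin d1 d2); split; first exact: gmin_pos.
move=> m D T tD fD.
rewrite KS_sum_sub mx_id2.
apply: le_lt_trans (ler_normB _ _) _.
have := k1 _ _ _ tD (fine_gmin_l fD); have := k2 _ _ _ tD (fine_gmin_r fD).
lra.
Qed.

Lemma KS_piece p (x : R -> 'M[R]_(n, p)) c d I : c <= d ->
  KS_integral_le A x c d I ->
  forall eps, 0 < eps -> exists delta : R -> R,
    (forall t, c <= t <= d -> 0 < delta t) /\
   forall a b I1 I2, c <= a -> a <= b -> b <= d ->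
     KS_integral_le A x c a I1 -> KS_integral_le A x b d I2 ->
     forall m D T, tagged_division a b m D T -> delta_fine delta m D T ->
       `|KS_sum A x m D T - (I - I1 - I2)| < eps.
Proof.
move=> cd hI eps e0.
have e2 : 0 < eps / 2 by rewrite divr_gt0.
have e4 : 0 < eps / 4 by rewrite divr_gt0.
have [d0 [p0 h0]] := hI _ e2.
exists d0; split => // a b I1 I2 ca ab bd h1 h2 m D T tD fD.
have [d1 [p1 h1']] := h1 _ e4; have [d2 [p2 h2']] := h2 _ e4.
have p01 : forall t, c <= t <= a -> 0 < gmin d0 d1 t.
  apply: gmin_pos => // t /andP[? ?]; apply: p0; apply/andP; split; lra.
have p02 : forall t, b <= t <= d -> 0 < gmin d0 d2 t.
  apply: gmin_pos => // t /andP[? ?]; apply: p0; apply/andP; split; lra.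
have [m1 [D1 [T1 [t1 f1]]]] := cousin ca p01.
have [m2 [D2 [T2 [t2 f2]]]] := cousin bd p02.
have [m' [D' [T' [t' f' S' _]]]] := cat_all x t1 (fine_gmin_l f1) tD fD.
have [m'' [D'' [T'' [t'' f'' S'' _]]]] := cat_all x t' f' t2 (fine_gmin_l f2).
have := h0 _ _ _ t'' f''; rewrite S'' S'.
have := h1' _ _ _ t1 (fine_gmin_r f1); have := h2' _ _ _ t2 (fine_gmin_r f2).
rewrite (mx_id1 (KS_sum A x m D T) (KS_sum A x m1 D1 T1) (KS_sum A x m2 D2 T2)).
move=> k2 k1 k0.
apply: le_lt_trans (norm3 _ _ _) _.
lra.
Qed.

Lemma sol_int_le s0 (y : R -> 'cV[R]_n) a b : is_solution_from A s0 y ->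
  s0 <= a -> a <= b -> KS_integral_le A y a b (y b - y a).
Proof. by move=> hy sa ab; have := hy a b sa (le_trans sa ab); rewrite /KS_integral ab. Qed.

Lemma sol_piece s0 (y : R -> 'cV[R]_n) c d : is_solution_from A s0 y ->
  s0 <= c -> c <= d ->
  forall eps, 0 < eps -> exists delta : R -> R,
    (forall t, c <= t <= d -> 0 < delta t) /\
   forall a b, c <= a -> a <= b -> b <= d ->
     forall m D T, tagged_division a b m D T -> delta_fine delta m D T ->
       `|KS_sum A y m D T - (y b - y a)| < eps.
Proof.
move=> hy sc cd eps e0.
have [delta [dp h]] := KS_piece cd (sol_int_le hy sc cd) e0.
exists delta; split => // a b ca ab bd m D T tD fD.
have := h a b _ _ ca ab bd (sol_int_le hy sc ca)
  (sol_int_le hy (le_trans sc (le_trans ca ab)) bd) m D T tD fD.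
by rewrite mx_id4.
Qed.

End Integral.


Section BV.
Variables (R : realType) (n : nat) (A : R -> 'M[R]_n).

Definition hdv (a b r : R) :=
  exists m D, division a b m D /\ r <= var_sum A m D.

Lemma var_sum_ge0 m D : 0 <= var_sum A m D.
Proof. by apply: sumr_ge0 => i _. Qed.

Lemma hdv_cat a b c r1 r2 : hdv a b r1 -> hdv b c r2 -> hdv a c (r1 + r2).
Proof.
move=> [m1 [D1 [d1 v1]]] [m2 [D2 [d2 v2]]].
have E : D1 m1 = D2 0%N by case: d1 => _ [-> _]; case: d2 => ->.
exists (m1 + m2)%N, (catD m1 D1 D2); split; first exact: division_cat d1 d2.
have -> : var_sum A (m1 + m2) (catD m1 D1 D2) = var_sum A m1 D1 + var_sum A m2 D2.
  exact: (@sum_catDT _ _ (fun u v _ => `|A u - A v|) m1 m2 D1 (fun _ => 0) D2 (fun _ => 0) E).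
exact: lerD.
Qed.

Lemma hdv_mono a b r r' : hdv a b r -> r' <= r -> hdv a b r'.
Proof. by move=> [m [D [d v]]] h; exists m, D; split => //; apply: le_trans v. Qed.

Lemma hdv_single a b : a < b -> hdv a b `|A b - A a|.
Proof.
move=> ab; exists 1%N, (D1pt a b); split.
  by have [] := @tagged_single R a b a ab; first by rewrite lexx ltW.
by rewrite /var_sum big_ord1.
Qed.

Lemma hdv_le a b : a <= b -> hdv a b 0.
Proof.
rewrite le_eqVlt => /orP[/eqP <-|ab].
  by exists 0%N, (fun _ => a); split; [split => //; split|rewrite /var_sum big_ord0].
by apply: hdv_mono (hdv_single ab) _.
Qed.

Lemma hdv_bound a b : bounded_variation_on A a b ->
  exists M, forall r, hdv a b r -> r <= M.
Proof.
by move=> [M hM]; exists M => r [m [D [d v]]]; apply: le_trans v (hM _ _ d).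
Qed.

Lemma archi_contra (M e : R) : 0 < e -> (forall k : nat, k%:R * e <= M) -> False.
Proof.
move=> e0 h.
have M0 : 0 <= M by have := h 0%N; rewrite mul0r.
have := archi_boundP (divr_ge0 M0 (ltW e0)).
set k := Num.bound _; move=> hk.
have := h k.
rewrite ltr_pdivrMr // in hk.
lra.
Qed.


Lemma div_single (a b : R) : a < b -> division a b 1 (D1pt a b).
Proof. by move=> ab; have [] := @tagged_single R a b a ab; first by rewrite lexx ltW. Qed.

Lemma var_single (a b : R) : var_sum A 1 (D1pt a b) = `|A b - A a|.
Proof. by rewrite /var_sum big_ord1. Qed.

Lemma var_small_right (t0 eps : R) : loc_BV_J A -> 0 <= t0 -> 0 < eps ->
  exists h : R, 0 < h /\ forall (u v : R) m D, t0 < u -> u <= v -> v <= t0 + h ->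
     division u v m D -> var_sum A m D <= eps.
Proof.
move=> bv t0p e0.
apply: contrapT => H.
have step : forall h, 0 < h -> exists u v, [/\ t0 < u, u <= v, v <= t0 + h & hdv u v eps].
  move=> h hp.
  case: (EM (exists (u v : R) m D, [/\ t0 < u, u <= v, v <= t0 + h, division u v m D & eps < var_sum A m D])).
    move=> [u [v [m [D [a1 a2 a3 a4 a5]]]]]; exists u, v; split => //.
    by exists m, D; split => //; apply: ltW.
  move=> nex; exfalso; apply: H; exists h; split => // u v m D a1 a2 a3 a4.
  rewrite leNgt; apply/negP => a5; apply: nex; by exists u, v, m, D.
have claim : forall k : nat, exists u, [/\ t0 < u, u <= t0 + 1 & hdv u (t0 + 1) (k%:R * eps)].
  elim=> [|k [u [u1 u2 u3]]].
    exists (t0 + 1); split; [lra | lra | ]; rewrite mul0r; exact: hdv_le.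
  have [u' [v' [b1 b2 b3 b4]]] := step (u - t0) (ltac:(lra)).
  exists u'; split; [by [] | lra | ].
  have := hdv_cat (hdv_cat b4 (@hdv_le v' u (ltac:(lra)))) u3.
  by move/hdv_mono; apply; rewrite -addn1 natrD mulrDl mul1r; lra.
have [M hM] := hdv_bound (bv t0 (t0 + 1) t0p (ltac:(lra))).
apply: (@archi_contra M _ e0) => k.
have [u [u1 u2 u3]] := claim k.
apply: hM; have := hdv_cat (@hdv_le t0 u (ltW u1)) u3; by rewrite add0r.
Qed.

Lemma var_small_left (t0 eps : R) : loc_BV_J A -> 0 < t0 -> 0 < eps ->
  exists h : R, 0 < h /\ forall (u v : R) m D, t0 - h <= u -> u <= v -> v < t0 ->
     division u v m D -> var_sum A m D <= eps.
Proof.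
move=> bv t0p e0.
apply: contrapT => H.
have step : forall h, 0 < h -> exists u v, [/\ t0 - h <= u, u <= v, v < t0 & hdv u v eps].
  move=> h hp.
  case: (EM (exists (u v : R) m D, [/\ t0 - h <= u, u <= v, v < t0, division u v m D & eps < var_sum A m D])).
    move=> [u [v [m [D [a1 a2 a3 a4 a5]]]]]; exists u, v; split => //.
    by exists m, D; split => //; apply: ltW.
  move=> nex; exfalso; apply: H; exists h; split => // u v m D a1 a2 a3 a4.
  rewrite leNgt; apply/negP => a5; apply: nex; by exists u, v, m, D.
pose p := t0 / 2.
have claim : forall k : nat, exists v, [/\ p <= v, v < t0 & hdv p v (k%:R * eps)].
  elim=> [|k [v [v1 v2 v3]]].
    exists p; split; [lra | rewrite /p; lra | ]; rewrite mul0r; exact: hdv_le.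
  have [u' [v' [b1 b2 b3 b4]]] := step (t0 - v) (ltac:(lra)).
  exists v'; split; [lra | by [] | ].
  have := hdv_cat (hdv_cat v3 (@hdv_le v u' (ltac:(lra)))) b4.
  by move/hdv_mono; apply; rewrite -addn1 natrD mulrDl mul1r; lra.
have [M hM] := hdv_bound (bv p t0 (ltac:(rewrite /p; lra)) (ltac:(rewrite /p; lra))).
apply: (@archi_contra M _ e0) => k.
have [v [v1 v2 v3]] := claim k.
apply: hM; have := hdv_cat v3 (@hdv_le v t0 (ltW v2)); by rewrite addr0.
Qed.

End BV.


Section LL.
Variables (R : realType) (n : nat) (A : R -> 'M[R]_n).
Lemma left_lim (t0 : R) : loc_BV_J A -> 0 < t0 ->
  A s @[s --> t0^'-] --> lim (A s @[s --> t0^'-]).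
Proof.
move=> bv t0p.
apply/cauchy_cvgP.
apply: cauchy_exP => e e0.
have e2 : 0 < e / 2 by rewrite divr_gt0.
have [h [hp hh]] := var_small_left bv t0p e2.
exists (A (t0 - h / 2)).
have hlt : t0 - h / 2 < t0 by lra.
have hle : t0 - h <= t0 - h / 2 by lra.
have e2lt : e / 2 < e by lra.
have H : \forall s \near t0^'-, ball (A (t0 - h / 2)) e (A s).
  near=> s.
  have s1 : t0 - h / 2 < s by near: s; exact: nbhs_left_gt.
  have s2 : s < t0 by near: s; exact: nbhs_left_lt.
  rewrite -ball_normE /ball_ /=.
  have := hh _ _ _ _ hle (ltW s1) s2 (div_single s1).
  rewrite var_single distrC => hv.
  exact: le_lt_trans hv e2lt.
exact: H.
Unshelve. all: by end_near.
Qed.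
End LL.


Section Bnd.
Variables (R : realType) (n : nat) (A : R -> 'M[R]_n).

Lemma div_mono (a b : R) m D : division a b m D ->
  forall i j, (i <= j)%N -> (j <= m)%N -> D i <= D j.
Proof.
move=> [_ [_ h]] i j; elim: j => [|j IH] ij jm.
  by move: ij; rewrite leqn0 => /eqP ->.
case: (eqVneq i j.+1) => [-> //|ne].
have ij' : (i <= j)%N by rewrite -ltnS ltn_neqAle ne ij.
exact: le_trans (IH ij' (ltnW jm)) (ltW (h j jm)).
Qed.

Lemma div_bounds (a b : R) m D : division a b m D ->
  forall i, (i <= m)%N -> a <= D i <= b.
Proof.
move=> d i im; have [d0 [dm _]] := d.
by rewrite -{1}d0 -dm !(div_mono d) // leq0n.
Qed.

Lemma find_interval (a b t : R) m D : division a b m D -> a <= t -> t <= b ->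
  t = a \/ exists i, (i < m)%N /\ D i <= t <= D i.+1.
Proof.
move=> d a_t tb; have [d0 [dm h]] := d.
suff : forall k, (k <= m)%N -> t <= D k ->
    t = a \/ exists i, (i < k)%N /\ D i <= t <= D i.+1.
  move=> /(_ m (leqnn m)); rewrite dm => /(_ tb) [->|[i [im hi]]]; first by left.
  by right; exists i.
elim=> [|k IH] km tk.
  by left; apply/le_anti; rewrite a_t -d0 tk.
case: (lerP t (D k)) => htk.
  case: (IH (ltnW km) htk) => [->|[i [ik hi]]]; first by left.
  by right; exists i; split => //; apply: ltnW.
by right; exists k; split => //; rewrite ltW.
Qed.

Lemma KS_single p (x : R -> 'M[R]_(n, p)) (u v w : R) :
  KS_sum A x 1 (D1pt u v) (fun _ => w) = (A v - A u) *m x w.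
Proof. by rewrite /KS_sum big_ord1. Qed.

Lemma fine_single (delta : R -> R) (u v w : R) :
  w - delta w < u -> v < w + delta w -> delta_fine delta 1 (D1pt u v) (fun _ => w).
Proof. by move=> h1 h2 i; rewrite ltnS leqn0 => /eqP ->. Qed.

Lemma A_bounded (a b : R) : loc_BV_J A -> 0 <= a -> a <= b ->
  exists MA, 0 <= MA /\ forall t, a <= t <= b -> `|A t| <= MA.
Proof.
move=> bv a0 ab.
have [MV hMV] := hdv_bound (bv a b a0 ab).
have MV0 : 0 <= MV by apply: hMV; apply: hdv_le.
exists (`|A a| + MV); split; first by rewrite addr_ge0.
move=> t /andP[a_t tb].
case: (eqVneq t a) => [->|ta]; first by rewrite lerDl.
have atl : a < t by rewrite lt_neqAle eq_sym ta a_t.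
have := hMV _ (hdv_cat (hdv_single A atl) (hdv_le A tb)).
rewrite addr0 => h.
apply: le_trans (_ : `|A a| + `|A t - A a| <= _); last by rewrite lerD2l.
by have := ler_normD (A a) (A t - A a); rewrite subrKC.
Qed.

Lemma KS1_bound (u v : R) (w : 'cV[R]_n) MA :
  `|A u| <= MA -> `|A v| <= MA -> `|(A u - A v) *m w| <= n%:R * (MA + MA) * `|w|.
Proof.
move=> hu hv; apply: le_trans (mulmx_norm _ _) _.
apply: ler_wpM2r => //; apply: ler_wpM2l => //.
by apply: le_trans (ler_normB _ _) _; apply: lerD.
Qed.

Lemma mx_id5 p q (yt yT K : 'M[R]_(p,q)) : yt = yT - K + (K - (yT - yt)).
Proof. by apply/matrixP => i j; rewrite !mxE; ring. Qed.

Lemma mx_id6 p q (yt yT K : 'M[R]_(p,q)) : yt = yT + K - (K - (yt - yT)).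
Proof. by apply/matrixP => i j; rewrite !mxE; ring. Qed.

Lemma sol_bounded s0 (y : R -> 'cV[R]_n) (a b : R) : loc_BV_J A ->
  is_solution_from A s0 y -> 0 <= s0 -> s0 <= a -> a <= b ->
  exists M, forall t, a <= t <= b -> `|y t| <= M.
Proof.
move=> bv hy s0p sa ab.
have [MA [MA0 hMA]] := A_bounded bv (le_trans s0p sa) ab.
have [d [dp hd]] := sol_piece hy sa ab ltr01.
have [m [D [T [[dD tT] fD]]]] := cousin ab dp.
pose C := 1 + n%:R * (MA + MA).
have C1 : 1 <= C by rewrite lerDl mulr_ge0 // addr_ge0.
exists (`|y a| + \sum_(i < m) C * `|y (T i)| + 1).
have S0 : 0 <= \sum_(i < m) C * `|y (T i)|.
  by apply: sumr_ge0 => i _; rewrite mulr_ge0 // (le_trans ler01 C1).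
move=> t /andP[a_t tb].
case: (find_interval dD a_t tb) => [->|[i [im /andP[h1 h2]]]].
  have := normr_ge0 (y a); lra.
have Cs : C * `|y (T i)| <= \sum_(i < m) C * `|y (T i)|.
  rewrite (bigD1 (Ordinal im)) //= lerDl; apply: sumr_ge0 => j _.
  by rewrite mulr_ge0 // (le_trans ler01 C1).
have [Ti1 Ti2] : D i <= T i /\ T i <= D i.+1 by have /andP[] := tT i im.
have [f1 f2] := fD i im.
have /andP[Da _] := div_bounds dD (ltnW im).
have /andP[_ Db] := div_bounds dD im.
have Tab : a <= T i <= b by apply/andP; split; lra.
have dT := dp _ Tab.
have key : `|y t| <= C * `|y (T i)| + 1.
  have yT0 := normr_ge0 (y (T i)).
  have CE : C * `|y (T i)| = `|y (T i)| + n%:R * (MA + MA) * `|y (T i)| by rewrite /C; ring.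
  case: (ltgtP t (T i)) => [tT' | Tt | ->].
  - have td := tagged_single tT' (t := T i) (ltac:(by rewrite lexx ltW)).
    have fd : delta_fine d 1 (D1pt t (T i)) (fun _ => T i) by apply: fine_single; lra.
    have := hd t (T i) a_t (ltW tT') (ltac:(lra)) _ _ _ td fd.
    rewrite KS_single => h.
    have hb := KS1_bound (y (T i)) (hMA (T i) Tab) (hMA t (ltac:(by rewrite a_t tb))).
    rewrite (mx_id5 (y t) (y (T i)) ((A (T i) - A t) *m y (T i))).
    apply: le_trans (ler_normD _ _) _.
    have := ler_normB (y (T i)) ((A (T i) - A t) *m y (T i)).
    lra.
  - have td := tagged_single Tt (t := T i) (ltac:(by rewrite lexx ltW)).
    have fd : delta_fine d 1 (D1pt (T i) t) (fun _ => T i) by apply: fine_single; lra.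
    have := hd (T i) t (ltac:(lra)) (ltW Tt) tb _ _ _ td fd.
    rewrite KS_single => h.
    have hb := KS1_bound (y (T i)) (hMA t (ltac:(by rewrite a_t tb))) (hMA (T i) Tab).
    rewrite (mx_id6 (y t) (y (T i)) ((A t - A (T i)) *m y (T i))).
    apply: le_trans (ler_normB _ _) _.
    have := ler_normD (y (T i)) ((A t - A (T i)) *m y (T i)).
    lra.
  - have := mulr_ge0 (mulr_ge0 (ler0n _ n) (addr_ge0 MA0 MA0)) yT0. lra.
have := normr_ge0 (y a); lra.
Qed.

End Bnd.


Section Uniq.
Variables (R : realType) (n : nat) (A : R -> 'M[R]_n).

Lemma small_norm0 p q (M : 'M[R]_(p,q)) : (forall e, 0 < e -> `|M| < e) -> M = 0.
Proof.
move=> h; apply/eqP; rewrite -normr_le0.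
case: (lerP `|M| 0) => // M0; have := h _ M0; by rewrite ltxx.
Qed.

Lemma le_eps (x y : R) : (forall e, 0 < e -> x < e + y) -> x <= y.
Proof.
move=> h; case: (lerP x y) => // yx.
have := h (x - y) (ltac:(lra)); lra.
Qed.

Lemma shift_div (a b : R) m D : division a b m.+1 D ->
  division (D 1%N) b m (fun i => D i.+1).
Proof. by move=> [d0 [dm h]]; split => //; split => // i im; apply: h. Qed.

Lemma right_step s0 (y : R -> 'cV[R]_n) (c : R) : loc_BV_J A ->
  is_solution_from A s0 y -> 0 <= s0 -> s0 <= c -> y c = 0 ->
  exists h : R, 0 < h /\ forall t, c <= t <= c + h -> y t = 0.
Proof.
move=> bv hy s0p sc yc.
have n1 : 0 < n%:R + 1 :> R by rewrite ltr_wpDl.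
pose e0 : R := (2 * (n%:R + 1))^-1.
have e0p : 0 < e0 by rewrite invr_gt0 mulr_gt0.
have ne0 : n%:R * e0 <= 1 / 2.
  have E : (n%:R + 1) * e0 = 1 / 2 by rewrite /e0; field; rewrite gt_eqF.
  rewrite mulrDl mul1r in E; lra.
have [h [hp hh]] := var_small_right bv (le_trans s0p sc) e0p.
exists h; split => //.
have cb : c <= c + h by lra.
have [M hM] := sol_bounded bv hy s0p sc cb.
pose Y := [set r | exists t, c <= t <= c + h /\ r = `|y t|].
have Yc : Y 0 by exists c; rewrite lexx cb yc normr0.
have hs : has_sup Y.
  by split; [exists 0 | exists M => r [t [ht ->]]; exact: hM].
pose K := sup Y.
have K0 : 0 <= K by apply: (sup_upper_bound hs).
have yK : forall t, c <= t <= c + h -> `|y t| <= K.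
  by move=> t ht; apply: (sup_upper_bound hs); exists t.
have half : forall t, c <= t <= c + h -> `|y t| <= K / 2.
  move=> t /andP[ct th].
  case: (eqVneq t c) => [->|tc]; first by rewrite yc normr0 divr_ge0.
  have ctl : c < t by rewrite lt_neqAle eq_sym tc ct.
  apply: le_eps => eta etap.
  have [d [dp hd]] := sol_int_le hy sc ct etap.
  pose d' := gmin d (fun r => if c < r then r - c else 1).
  have d'p : forall r, c <= r <= t -> 0 < d' r.
    apply: gmin_pos => // r _; case: ifP => // cr; by rewrite subr_gt0.
  have [m [D [T [tD fD]]]] := cousin ct d'p.
  have := hd _ _ _ tD (fine_gmin_l fD); rewrite yc subr0 => hS.
  have fD2 := fine_gmin_r fD.
  case: m D T tD fD fD2 hS => [|m] D T tD fD fD2 hS.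
    by case: tD => [[d0 [dm _]] _]; move: ctl; rewrite -d0 -dm ltxx.
  have [[d0 [dm dh]] tT] := tD.
  have dD : division c t m.+1 D by [].
  have T0 : T 0%N = c.
    have [f1 _] := fD2 0%N (ltn0Sn m).
    have /andP[cT0 _] := tT 0%N (ltn0Sn m).
    rewrite d0 in cT0 f1.
    move: f1; case: ifP => [cT|/negbT]; first by lra.
    by rewrite -leNgt => Tc _; apply/le_anti; rewrite Tc cT0.
  rewrite /KS_sum big_ord_recl /= T0 yc mulmx0 add0r in hS.
  set S := \sum_(i < m) _ in hS.
  have Sb : `|S| <= K / 2.
    apply: le_trans (ler_norm_sum _ _ _) _.
    apply: le_trans (_ : \sum_(i < m) (n%:R * K) * `|A (D i.+2) - A (D i.+1)| <= _).
      apply: ler_sum => i _; apply: le_trans (mulmx_norm _ _) _.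
      have /andP[Ti1 Ti2] := tT i.+1 (ltn_ord i).
      have /andP[Di1 _] := div_bounds dD (i := i.+1) (ltnW (ltn_ord i)).
      have /andP[_ Di2] := div_bounds dD (i := i.+2) (ltn_ord i).
      have yT := yK (T i.+1) (ltac:(apply/andP; split; lra)).
      have yT' : 0 <= K - `|y (T i.+1)| by rewrite subr_ge0.
      have := mulr_ge0 (mulr_ge0 (ler0n R n) (normr_ge0 (A (D i.+2) - A (D i.+1)))) yT'.
      lra.
    rewrite -mulr_sumr.
    have dv := shift_div dD.
    have /andP[D1t _] : D 1%N <= t <= t by apply/andP; split; [have /andP[] := div_bounds dD (ltn0Sn m) | ].
    have := hh (D 1%N) t m (fun i => D i.+1) (ltac:(rewrite -d0; exact: dh 0%N (ltn0Sn m))) D1t th dv.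
    rewrite /var_sum => hv.
    have := ler_wpM2l (mulr_ge0 (ler0n R n) K0) hv.
    have := ler_wpM2l K0 ne0.
    lra.
  have : `|y t| <= `|S| + `|S - y t|.
    by have := ler_normB S (S - y t); rewrite opprB addrCA subrr addr0.
  lra.
have K2 : K <= K / 2.
  by apply: ge_sup; [exists 0 | move=> r [t [ht ->]]; exact: half].
move=> t ht; apply/eqP; rewrite -normr_le0.
have := yK t ht; lra.
Qed.

End Uniq.


Section Uniq2.
Variables (R : realType) (n : nat) (A : R -> 'M[R]_n).

Lemma mx_id7 p q (X Y v : 'M[R]_(p,q)) : X + Y - v = (X - (v - 0)) + Y.
Proof. by apply/matrixP => i j; rewrite !mxE; ring. Qed.

Lemma mx_id8 p q (Ac At L : 'M[R]_(p,q)) : Ac - L = (Ac - At) + (At - L).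
Proof. by apply/matrixP => i j; rewrite !mxE; ring. Qed.

Lemma sol_unique s0 (y : R -> 'cV[R]_n) : loc_BV_J A ->
  (forall t : R, 0 < t -> 1%:M - jump_minus A t \in unitmx) ->
  0 <= s0 -> is_solution_from A s0 y -> y s0 = 0 -> forall t, s0 <= t -> y t = 0.
Proof.
move=> bv hinv s0p hy ys0 t1 st1.
apply: contrapT => yt1.
pose S := [set x | s0 <= x <= t1 /\ forall r, s0 <= r <= x -> y r = 0].
have Ss0 : S s0.
  split; first by rewrite lexx st1.
  move=> r /andP[h1 h2]; have -> // : r = s0 by apply/le_anti; rewrite h1 h2.
have hs : has_sup S by split; [exists s0 | exists t1 => x [/andP[_ ?] _]].
pose c := sup S.
have sc : s0 <= c by apply: (sup_upper_bound hs).
have ct1 : c <= t1 by apply: ge_sup; [exists s0 | move=> x [/andP[_ ?] _]].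
have Z1 : forall r, s0 <= r -> r < c -> y r = 0.
  move=> r sr rc.
  have [x [_ hx] rx] := sup_adherent (ltac:(rewrite subr_gt0; exact: rc) : 0 < c - r) hs.
  apply: hx; rewrite sr /=; rewrite -/c in rx; lra.
have Z2 : y c = 0.
  case: (eqVneq c s0) => [->//|cs].
  have scl : s0 < c by rewrite lt_neqAle eq_sym cs sc.
  have c0 : 0 < c by lra.
  set v := y c.
  have hL := left_lim bv c0.
  set L := lim _ in hL.
  have E : (A c - L) *m v = v.
    apply/eqP; rewrite -subr_eq0; apply/eqP; apply: small_norm0 => e e0.
    have e2 : 0 < e / 2 by rewrite divr_gt0.
    have [d [dp hd]] := sol_piece hy (lexx s0) sc e2.
    have dc : 0 < d c by apply: dp; rewrite sc lexx.
    pose k : R := n%:R * `|v| + 1.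
    have k0 : 0 < k by rewrite /k ltr_wpDl // mulr_ge0.
    pose eta := e / (2 * k).
    have etap : 0 < eta by rewrite divr_gt0 // mulr_gt0.
    have etak : eta * k = e / 2 by rewrite /eta; field; rewrite gt_eqF.
    have l1 : c - d c < c by lra.
    have hn : \forall tau \near c^'-,
        [/\ `|L - A tau| < eta, c - d c < tau, s0 < tau & tau < c].
      near=> tau; split.
      - by near: tau; apply: cvgr_dist_lt.
      - by near: tau; exact: nbhs_left_gt.
      - by near: tau; exact: nbhs_left_gt.
      - by near: tau; exact: nbhs_left_lt.
    have [tau [t1' t2' t3' t4']] := @filter_ex _ _ (at_left_proper_filter c) _ hn.
    have td := tagged_single t4' (t := c) (ltac:(by rewrite lexx ltW)).
    have fd : delta_fine d 1 (D1pt tau c) (fun _ => c) by apply: fine_single; lra.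
    have := hd tau c (ltW t3') (ltW t4') (lexx c) _ _ _ td fd.
    rewrite KS_single (Z1 tau (ltW t3') t4') -/v => h1.
    rewrite (mx_id8 (A c) (A tau) L) mulmxDl mx_id7.
    apply: le_lt_trans (ler_normD _ _) _.
    have h2 : `|(A tau - L) *m v| <= n%:R * `|A tau - L| * `|v| by exact: mulmx_norm.
    have h3 : n%:R * `|A tau - L| * `|v| <= `|A tau - L| * k.
      rewrite /k mulrDr mulr1 mulrCA mulrA lerDl //.
    have h4 : `|A tau - L| * k < eta * k by rewrite ltr_pM2r // distrC.
    lra.
  have hu := hinv c c0.
  have E2 : (1%:M - jump_minus A c) *m v = 0.
    by rewrite /jump_minus -/L mulmxBl mul1mx E subrr.
  by rewrite -(mulKmx hu v) E2 mulmx0.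
have [h [hp Z3]] := right_step bv hy s0p sc Z2.
case: (eqVneq c t1) => [ct|ctn]; first by apply: yt1; rewrite -ct Z2.
have ctl : c < t1 by rewrite lt_neqAle ctn ct1.
pose x := if c + h <= t1 then c + h else t1.
have cx : c < x by rewrite /x; case: ifP => _; lra.
have xt : x <= t1 by rewrite /x; case: ifP => // /negbT; rewrite -ltNge; lra.
have xh : x <= c + h by rewrite /x; case: ifP => // /negbT; rewrite -ltNge; lra.
have Sx : S x.
  split; first by apply/andP; split; lra.
  move=> r /andP[sr rx].
  case: (ltP r c) => rc; first exact: Z1.
  by apply: Z3; apply/andP; split; lra.
have : x <= c by apply: (sup_upper_bound hs).
lra.
Unshelve. all: by end_near.
Qed.

End Uniq2.


Section Main.
Variables (R : realType) (n : nat) (A : R -> 'M[R]_n).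

Lemma div_aa (a : R) m D : division a a m D -> m = 0%N.
Proof.
move=> d; case: m d => // m d.
have [d0 [dm h]] := d.
have := div_mono d (i := 1%N) (j := m.+1) (ltac:(by [])) (leqnn _).
have := h 0%N (ltn0Sn m); rewrite d0 dm => h1 h2; have := lt_le_trans h1 h2; by rewrite ltxx.
Qed.

Lemma KS_le_refl p (x : R -> 'M[R]_(n,p)) (a : R) : KS_integral_le A x a a 0.
Proof.
move=> e e0; exists (fun _ => 1); split => // m D T [d _] _.
by rewrite (div_aa d) /KS_sum big_ord0 subr0 normr0.
Qed.

Lemma KS_le_sub_interval p (x : R -> 'M[R]_(n,p)) (c a d : R) I I1 :
  c <= a -> a <= d ->
  KS_integral_le A x c d I -> KS_integral_le A x c a I1 ->
  KS_integral_le A x a d (I - I1).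
Proof.
move=> ca ad hI h1 e e0.
have [delta [dp hd]] := KS_piece (le_trans ca ad) hI e0.
exists delta; split.
  by move=> t /andP[? ?]; apply: dp; apply/andP; split; lra.
move=> m D T tD fD.
have := hd a d I1 0 ca ad (lexx d) h1 (KS_le_refl x d) m D T tD fD.
by rewrite subr0.
Qed.

Lemma U_sol (U : R -> R -> 'M[R]_n) (s0 : R) (v : 'cV[R]_n) :
  transition_matrix A U -> 0 <= s0 ->
  is_solution_from A s0 (fun t => U t s0 *m v).
Proof.
move=> hU s0p.
have base : forall t, s0 <= t ->
    KS_integral_le A (fun r => U r s0) s0 t (U t s0 - 1%:M).
  by move=> t st; have := hU t s0 (le_trans s0p st) s0p; rewrite /KS_integral st.
have le_case : forall a b, s0 <= a -> a <= b ->
    KS_integral_le A (fun t => U t s0 *m v) a b (U b s0 *m v - U a s0 *m v).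
  move=> a b sa ab.
  have := KS_le_sub_interval sa ab (base b (le_trans sa ab)) (base a sa).
  move/(KS_le_mulmx v).
  have -> : (U b s0 - 1%:M - (U a s0 - 1%:M)) *m v = U b s0 *m v - U a s0 *m v.
    by rewrite -mulmxBl; congr (_ *m _); apply/matrixP => i j; rewrite !mxE; ring.
  by [].
move=> a b sa sb; rewrite /KS_integral.
case: ifP => ab; first exact: le_case.
move/negbT: ab; rewrite -ltNge => ba.
by rewrite opprB; exact: le_case sb (ltW ba).
Qed.

Lemma U_refl (U : R -> R -> 'M[R]_n) (s : R) : transition_matrix A U -> 0 <= s ->
  U s s = 1%:M.
Proof.
move=> hU sp; have := hU s s sp sp; rewrite /KS_integral lexx => h.
have := KS_le_unique (lexx s) h (KS_le_refl _ s).
by move/eqP; rewrite subr_eq0 => /eqP.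
Qed.

Lemma sol_sub s0 (x1 x2 : R -> 'cV[R]_n) : is_solution_from A s0 x1 ->
  is_solution_from A s0 x2 -> is_solution_from A s0 (fun t => x1 t - x2 t).
Proof.
move=> h1 h2 a b sa sb; have := h1 a b sa sb; have := h2 a b sa sb.
rewrite /KS_integral; case: ifP => _ k2 k1.
  have := KS_le_sub k1 k2.
  have -> : x1 b - x1 a - (x2 b - x2 a) = x1 b - x2 b - (x1 a - x2 a) by
    apply/matrixP => i j; rewrite !mxE; ring.
  by [].
have := KS_le_sub k1 k2.
have -> : - (x1 b - x1 a) - - (x2 b - x2 a) = - (x1 b - x2 b - (x1 a - x2 a)) by
  apply/matrixP => i j; rewrite !mxE; ring.
by [].
Qed.

Lemma sol_repr (U : R -> R -> 'M[R]_n) s0 (x : R -> 'cV[R]_n) : loc_BV_J A ->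
  (forall t : R, 0 < t -> 1%:M - jump_minus A t \in unitmx) ->
  transition_matrix A U -> 0 <= s0 -> is_solution_from A s0 x ->
  forall t, s0 <= t -> x t = U t s0 *m x s0.
Proof.
move=> bv hinv hU s0p hx t st.
have hy := sol_sub hx (U_sol (x s0) hU s0p).
have := sol_unique bv hinv s0p hy _ st.
rewrite U_refl // mul1mx subrr => /(_ erefl) /eqP.
by rewrite subr_eq0 => /eqP.
Qed.

Definition ej (j : 'I_n) : 'cV[R]_n := delta_mx j 0.

Lemma norm_le_cols (M : 'M[R]_n) :
  `|M| <= \sum_(j < n) `|M *m ej j|.
Proof.
apply: mx_norm_le; first by apply: sumr_ge0.
move=> i j.
have -> : M i j = (M *m ej j) i 0 by rewrite /ej -colE mxE.
apply: le_trans (mx_entry_le _ i 0) _.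
by rewrite (bigD1 j) //= lerDl; apply: sumr_ge0.
Qed.

End Main.


Lemma U_bounded (R : realType) (n : nat) (A : R -> 'M[R]_n)
    (U : R -> R -> 'M[R]_n) (s0 : R) : loc_BV_J A -> transition_matrix A U -> 0 <= s0 ->
  `|U t s0| @[t --> +oo] --> (0 : R) ->
  exists B, 0 <= B /\ forall t, s0 <= t -> `|U t s0| <= B.
Proof.
move=> bv hU s0p hc.
move/cvgr_dist_lt: hc => /(_ 1 ltr01) [M [Mr HM]].
pose T1 := if M + 1 <= s0 then s0 else M + 1.
have sT : s0 <= T1 by rewrite /T1; case: ifP => // /negbT; rewrite -ltNge => h; lra.
have MT : M < T1 by rewrite /T1; case: ifP => h; lra.
have hj : forall j : 'I_n, exists Bj : R, forall t, s0 <= t <= T1 -> `|U t s0 *m ej R j| <= Bj.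
  by move=> j; exact: sol_bounded bv (U_sol (ej R j) hU s0p) s0p (lexx s0) sT.
have [f hf] := choice hj.
have S0 : 0 <= \sum_(j < n) `|f j| by apply: sumr_ge0.
exists (\sum_(j < n) `|f j| + 1); split; first by rewrite addr_ge0.
move=> t st.
case: (lerP t T1) => tT.
  apply: le_trans (norm_le_cols _) _.
  apply: le_trans (_ : \sum_(j < n) `|f j| <= _); last by rewrite lerDl.
  apply: ler_sum => j _; apply: le_trans (hf j t _) (ler_norm _); by rewrite st tT.
have := HM t (lt_trans MT tT); rewrite sub0r normrN normr_id => h1.
lra.
Qed.


Unset Implicit Arguments.

Theorem theorem3p6 (R : realType) (n : nat) (A : R -> 'M[R]_n)
    (U : R -> R -> 'M[R]_n) :
  loc_BV_J A ->
  (forall t : R, 0 < t -> 1%:M - jump_minus A t \in unitmx) ->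
  (forall t : R, 0 <= t -> 1%:M + jump_plus A t \in unitmx) ->
  transition_matrix A U ->
  (trivial_glob_asympt_stable A <->
   forall s0 : R, 0 <= s0 -> `|U t s0| @[t --> +oo] --> (0 : R)).
Proof.
move=> bv hinv _ hU; split.
- move=> [_ hatt] s0 s0p.
  have hj : forall j : 'I_n, `|U t s0 *m ej R j| @[t --> +oo] --> (0 : R).
    move=> j; apply: (hatt s0 (ej R j) _ s0p (U_sol (ej R j) hU s0p)).
    by rewrite (U_refl hU s0p) mul1mx.
  have hs : \sum_(j < n) `|U t s0 *m ej R j| @[t --> +oo] --> (0 : R).
    have := @cvg_big _ 'I_n +%R 0 xpredT add_continuous R _ (index_enum _)
      (fun j t => `|U t s0 *m ej R j|) (fun=> 0) _ (fun j _ => hj j).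
    by rewrite big1 //; apply; exact: filter_class.
  apply: (squeeze_cvgr (f := fun=> 0) (h := fun t => \sum_(j < n) `|U t s0 *m ej R j|)).
  + by near=> t; rewrite normr_ge0 norm_le_cols.
  + exact: cvg_cst.
  + exact: hs.
- move=> hc; split.
  + move=> s0 eps s0p e0.
    have [B [B0 hB]] := U_bounded bv hU s0p (hc s0 s0p).
    have k0 : 0 < n%:R * B + 1 by rewrite ltr_wpDl // mulr_ge0.
    exists (eps / (n%:R * B + 1)); split; first by rewrite divr_gt0.
    move=> x0 x hx0 hx xs0 t st.
    rewrite (sol_repr bv hinv hU s0p hx st) xs0.
    apply: le_lt_trans (mulmx_norm _ _) _.
    rewrite ltr_pdivlMr // in hx0.
    have hu := hB t st.
    have z0 := normr_ge0 x0.
    have := ler_wpM2r z0 (ler_wpM2l (ler0n R n) hu).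
    lra.
  + move=> s0 x0 x s0p hx xs0.
    apply: (squeeze_cvgr (f := fun=> 0) (h := fun t => n%:R * `|U t s0| * `|x0|)).
    * near=> t.
      have st : s0 < t by near: t; apply: nbhs_pinfty_gt; exact: num_real.
      rewrite normr_ge0 /= (sol_repr bv hinv hU s0p hx (ltW st)) xs0.
      exact: mulmx_norm.
    * exact: cvg_cst.
    * have := cvgMr_tmp (b := `|x0|) (cvgMl_tmp (a := n%:R) (hc s0 s0p)).
      by move=> H; rewrite mulr0 mul0r in H; apply: H; exact: filter_class.
Unshelve. all: by end_near.
Qed.
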